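(* Let $\mathcal{T}$ be a finite tree, $w:V(\mathcal{T})\to\mathbb{R}_{\ge 0}$ a weight function, and $m=w(\mathcal{T})$. Then $$\mathtt{cent}(\mathcal{T},w)\le 2\cdot\mathtt{OPT}(\mathcal{T},w)-m.$$
   Context: For a subgraph $\mathcal{H}$ of $\mathcal{T}$, $w(\mathcal{H})=\sum_{x\in V(\mathcal{H})}w(x)$; for a subgraph $\mathcal{H}$, $w$ also denotes its restriction to $V(\mathcal{H})$. A search tree (STT) on a tree $\mathcal{T}$ is a rooted tree $T$ with vertex set $V(\mathcal{T})$ defined recursively: its root is an arbitrary vertex $r\in V(\mathcal{T})$, and the children of $r$ are the roots of search trees built on the connected components of $\mathcal{T}-r$ (one per component); a single-vertex tree has only itself as search tree. The cost of $T$ is $\mathtt{cost}_w(T)=\sum_{x}w(x)\cdot\mathtt{depth}_T(x)$, where the root has depth $1$. $\mathtt{OPT}(\mathcal{T},w)$ is the minimum cost over all search trees on $\mathcal{T}$. A vertex $v$ is a centroid of $(\mathcal{T},w)$ if every connected component $\mathcal{H}$ of $\mathcal{T}-v$ satisfies $w(\mathcal{H})\le w(\mathcal{T})/2$. A search tree $T$ is a centroid tree of $(\mathcal{T},w)$ if for every vertex $x$, $x$ is a centroid of $(\mathcal{T}[V(T_x)],w)$, where $T_x$ is the subtree of $T$ rooted at $x$. $\mathtt{cent}(\mathcal{T},w)$ is the maximum cost of a centroid tree of $(\mathcal{T},w)$. *)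

(* Defs.v *)
From Stdlib Require List.
From HB Require Import structures.
From mathcomp Require Import all_boot all_order all_algebra.
Set Implicit Arguments. Unset Strict Implicit. Unset Printing Implicit Defensive.
Import Order.TTheory GRing.Theory Num.Theory.
Local Open Scope ring_scope.

Definition is_tree (V : finType) (e : rel V) : Prop :=
  symmetric e /\ irreflexive e /\ (forall x y : V, connect e x y) /\
  (forall c : seq V, uniq c -> (2 < size c)%N -> ~~ cycle e c).

Definition induced (V : finType) (e : rel V) (S : {set V}) : rel V :=
  [rel x y | [&& e x y, x \in S & y \in S]].

Definition comps (V : finType) (e : rel V) (S : {set V}) : {set {set V}} :=
  [set [set y in S | connect (induced e S) x y] | x in S].

Inductive rtree (V : Type) : Type := Node : V -> list (rtree V) -> rtree V.
Arguments Node {V}.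

Definition rroot (V : Type) (t : rtree V) : V := let: Node r _ := t in r.

Fixpoint vseq (V : Type) (t : rtree V) : seq V :=
  match t with
  | Node r ch => r :: (fix f (l : list (rtree V)) : seq V :=
                         match l with nil => [::] | c :: l' => vseq c ++ f l' end) ch
  end.

Definition vset (V : finType) (t : rtree V) : {set V} := [set x in vseq t].

Fixpoint subtrees (V : Type) (t : rtree V) : list (rtree V) :=
  match t with
  | Node r ch => t :: (fix f (l : list (rtree V)) : list (rtree V) :=
                         match l with nil => nil | c :: l' => subtrees c ++ f l' end) ch
  end.

Inductive is_stt (V : finType) (e : rel V) : {set V} -> rtree V -> Prop :=
| stt_node (S : {set V}) (r : V) (ch : list (rtree V)) :
    r \in S ->
    perm_eq [seq vset c | c <- ch] (enum (comps e (S :\ r))) ->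
    (forall c, List.In c ch -> is_stt e (vset c) c) ->
    is_stt e S (Node r ch).

Fixpoint costd (V : Type) (R : nmodType) (mul : R -> nat -> R) (w : V -> R)
    (t : rtree V) (k : nat) : R :=
  match t with
  | Node r ch => mul (w r) k +
      (fix f (l : list (rtree V)) : R :=
         match l with nil => 0 | c :: l' => costd mul w c k.+1 + f l' end) ch
  end.

Definition cost (V : Type) (R : realFieldType) (w : V -> R) (t : rtree V) : R :=
  costd (fun a k => a * k%:R) w t 1.

Definition wsum (V : finType) (R : realFieldType) (w : V -> R) (H : {set V}) : R :=
  \sum_(x in H) w x.

Definition is_centroid (V : finType) (R : realFieldType) (e : rel V) (w : V -> R)
    (S : {set V}) (v : V) : Prop :=
  v \in S /\ forall H, H \in comps e (S :\ v) -> wsum w H <= wsum w S / 2%:R.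

Definition is_centroid_tree (V : finType) (R : realFieldType) (e : rel V) (w : V -> R)
    (t : rtree V) : Prop :=
  is_stt e [set: V] t /\
  forall s, List.In s (subtrees t) -> is_centroid e w (vset s) (rroot s).

(* Main.v *)
Require Import Defs.
From mathcomp Require Import all_boot all_order all_algebra.
From mathcomp Require Import ring lra.
Import Order.TTheory GRing.Theory Num.Theory.
Set Implicit Arguments. Unset Strict Implicit.
Local Open Scope ring_scope.

Fixpoint rtree_ind' (V : Type) (P : rtree V -> Prop)
  (H : forall r ch, (forall c, List.In c ch -> P c) -> P (Node r ch)) (t : rtree V) : P t :=
  match t with
  | Node r ch => H r ch ((fix g (l : list (rtree V)) : forall c, List.In c l -> P c :=
       match l with
       | nil => fun c (hin : List.In c nil) => False_ind _ hin
       | c0 :: l' => fun c hin => match hin with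
                     | or_introl E => eq_ind c0 P (@rtree_ind' V P H c0) c E
                     | or_intror h => g l' c h end
       end) ch)
  end.

Lemma vseq_node (V : Type) (r : V) ch : vseq (Node r ch) = r :: flatten (map (@vseq V) ch).
Proof. by rewrite /=; congr (_ :: _); elim: ch => //= c ch ->. Qed.

Lemma subtrees_node (V : Type) (r : V) ch :
  subtrees (Node r ch) = Node r ch :: flatten (map (@subtrees V) ch).
Proof. by rewrite /=; congr (_ :: _); elim: ch => //= c ch ->. Qed.

Lemma costd_node (V : Type) (R : nmodType) (mul : R -> nat -> R) (w : V -> R) r ch k :
  costd mul w (Node r ch) k = mul (w r) k + \sum_(c <- ch) costd mul w c k.+1.
Proof. by rewrite /=; congr (_ + _); elim: ch => [|c ch IH] /=; rewrite ?big_nil ?big_cons ?IH. Qed.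

Definition W (V : Type) (R : realFieldType) (w : V -> R) (l : seq V) := \sum_(x <- l) w x.

Arguments W {V R}.

Lemma sum_In (T : Type) (R : nmodType) (l : seq T) (F G : T -> R) :
  (forall c, List.In c l -> F c = G c) -> \sum_(c <- l) F c = \sum_(c <- l) G c.
Proof.
elim: l => [|a l IH] H; rewrite ?big_nil // !big_cons H /=; last by left.
by rewrite IH // => c Hc; apply: H; right.
Qed.

Lemma W_node (V : Type) (R : realFieldType) (w : V -> R) r ch :
  W w (vseq (Node r ch)) = w r + \sum_(c <- ch) W w (vseq c).
Proof. by rewrite vseq_node /W big_cons big_flatten big_map. Qed.

Lemma costdE (V : Type) (R : realFieldType) (w : V -> R) t k :
  costd (fun a k => a * k%:R) w t k.+1 =
  k%:R * W w (vseq t) + \sum_(s <- subtrees t) W w (vseq s).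
Proof.
elim/rtree_ind': t k => r ch IH k.
rewrite costd_node subtrees_node big_cons big_flatten big_map W_node.
rewrite (@sum_In _ _ _ _ (fun c => k.+1%:R * W w (vseq c) + \sum_(s <- subtrees c) W w (vseq s))); last first.
  by move=> c Hc; rewrite IH.
rewrite big_split /= -mulr_sumr -(addn1 k) natrD; ring.
Qed.

Lemma costE (V : Type) (R : realFieldType) (w : V -> R) t :
  cost w t = \sum_(s <- subtrees t) W w (vseq s).
Proof. by rewrite /cost costdE mul0r add0r. Qed.
Definition conn (V : finType) (e : rel V) (S : {set V}) :=
  forall x y, x \in S -> y \in S -> connect (induced e S) x y.

Definition comp (V : finType) (e : rel V) (S : {set V}) x :=
  [set y in S | connect (induced e S) x y].

Lemma induced_sym (V : finType) (e : rel V) (S : {set V}) : symmetric e -> symmetric (induced e S).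
Proof. by move=> Hs x y; rewrite /induced /= Hs; case: (x \in S); case: (y \in S); rewrite ?andbT ?andbF. Qed.

Lemma conn_equiv (V : finType) (e : rel V) (S : {set V}) : symmetric e ->
  equivalence_rel (connect (induced e S)).
Proof.
move=> Hs x y z; split; first exact: connect0.
move=> Hxy; apply/idP/idP => H.
  by apply: connect_trans H; rewrite (sym_connect_sym (induced_sym S Hs)).
exact: connect_trans Hxy H.
Qed.

Lemma comps_partition (V : finType) (e : rel V) (S : {set V}) : symmetric e ->
  partition (comps e S) S.
Proof. by move=> Hs; apply: equivalence_partitionP => x y z _ _ _; apply: conn_equiv. Qed.

Lemma comps_sub (V : finType) (e : rel V) (S H : {set V}) : H \in comps e S -> H \subset S.
Proof.
by case/imsetP => x _ ->; apply/subsetP => y; rewrite inE => /andP[].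
Qed.

Lemma comp_in (V : finType) (e : rel V) (S : {set V}) u : symmetric e -> u \in S ->
  (comp e S u \in comps e S) /\ (u \in comp e S u).
Proof.
move=> Hs Hu; split; first by apply/imsetP; exists u.
by rewrite inE Hu connect0.
Qed.

Lemma comps_eq (V : finType) (e : rel V) (S H : {set V}) u : symmetric e ->
  H \in comps e S -> u \in H -> H = comp e S u.
Proof.
move=> Hs /imsetP[x Hx ->]; rewrite inE => /andP[Hu Hxu].
apply/setP => y; rewrite !inE; case: (y \in S) => //=.
by case: (conn_equiv S Hs x u y) => _ ->.
Qed.

Lemma conn_restrict (V : finType) (e : rel V) (S : {set V}) x a z :
  a \in comp e S x -> connect (induced e S) a z -> connect (induced e (comp e S x)) a z.
Proof.
move=> Ha /connectP[p Hp ->]; elim: p a Hp Ha => [|b p IH] a /=; first by rewrite connect0.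
move=> /andP[Hab Hp] Ha.
have Hb : b \in comp e S x.
  have /and3P[_ _ HbS] := Hab.
  move: Ha; rewrite !inE HbS => /andP[_ Hxa].
  exact: connect_trans Hxa (connect1 Hab).
apply: connect_trans (connect1 _) (IH _ Hp Hb).
by rewrite /induced /= Ha Hb (andP Hab).1.
Qed.

Lemma comp_conn (V : finType) (e : rel V) (S H : {set V}) : symmetric e ->
  H \in comps e S -> conn e H.
Proof.
move=> Hs HH y z Hy Hz.
have HyS : y \in S by apply: (subsetP (comps_sub HH)).
rewrite (comps_eq Hs HH Hy) in Hz *.
apply: conn_restrict; first by rewrite inE HyS connect0.
by move: Hz; rewrite inE => /andP[].
Qed.

Lemma mem_flatten_vseq (V : finType) (ch : seq (rtree V)) x :
  (x \in flatten (map (@vseq V) ch)) = has (fun H : {set V} => x \in H) (map (@vset V) ch).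
Proof. by elim: ch => //= c ch IH; rewrite mem_cat IH inE. Qed.

Lemma cover_comps (V : finType) (e : rel V) (S : {set V}) : symmetric e ->
  cover (comps e S) = S.
Proof. by move=> Hs; have /and3P[/eqP -> _ _] := comps_partition S Hs. Qed.

Lemma vset_stt (V : finType) (e : rel V) S t : symmetric e -> is_stt e S t -> vset t = S.
Proof.
move=> Hs [] {S t} S r ch Hr Hperm _.
apply/setP => x; rewrite inE vseq_node in_cons mem_flatten_vseq (perm_has _ Hperm).
have -> : has (fun H : {set V} => x \in H) (enum (comps e (S :\ r))) = (x \in S :\ r).
  rewrite -{2}(cover_comps (S :\ r) Hs); apply/hasP/bigcupP => [[H]|[H]].
    by rewrite mem_enum => H1 H2; exists H.
  by move=> H1 H2; exists H; rewrite ?mem_enum.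
rewrite in_setD1; case: eqVneq => [->|] //=.
Qed.

Lemma map_In (T : Type) (U : eqType) (f : T -> U) (l : seq T) c :
  List.In c l -> f c \in map f l.
Proof. elim: l => //= a l IH [->|H]; rewrite in_cons ?eqxx // IH ?orbT //. Qed.

Lemma child_comp (V : finType) (e : rel V) S r ch c :
  is_stt e S (Node r ch) -> List.In c ch -> vset c \in comps e (S :\ r).
Proof.
move=> H Hc; inversion H as [S0 r0 ch0 Hr Hperm Hch]; subst.
by rewrite -mem_enum -(perm_mem Hperm) map_In.
Qed.

Lemma comp_child (V : finType) (e : rel V) S r ch H :
  is_stt e S (Node r ch) -> H \in comps e (S :\ r) -> exists c, List.In c ch /\ vset c = H.
Proof.
move=> Hst HH; inversion Hst as [S0 r0 ch0 Hr Hperm Hch]; subst.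
move: HH; rewrite -mem_enum -(perm_mem Hperm).
elim: (ch) => //= a l IH; rewrite in_cons => /orP[/eqP->|/IH [c [Hc1 Hc2]]].
  by exists a; split; [left|].
by exists c; split; [right|].
Qed.

Lemma sum_children (V : finType) (R : nmodType) (e : rel V) S r ch (f : {set V} -> R) :
  is_stt e S (Node r ch) ->
  \sum_(c <- ch) f (vset c) = \sum_(H in comps e (S :\ r)) f H.
Proof.
move=> Hst; inversion Hst as [S0 r0 ch0 Hr Hperm Hch]; subst.
by rewrite -(big_map (@vset V) xpredT f) (perm_big _ Hperm) big_enum.
Qed.

Arguments wsum {V R}.

Lemma wsumD1 (V : finType) (R : realFieldType) (w : V -> R) (S : {set V}) c :
  c \in S -> wsum w S = w c + wsum w (S :\ c).
Proof.
move=> Hc; rewrite /wsum (bigD1 c) //=; congr (_ + _).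
by apply: eq_bigl => x; rewrite in_setD1 andbC.
Qed.

Lemma wsumD (V : finType) (R : realFieldType) (w : V -> R) (S H : {set V}) :
  H \subset S -> wsum w (S :\: H) = wsum w S - wsum w H.
Proof.
move=> HS; rewrite /wsum (bigID (fun x => x \in H) (fun x => x \in S)) /=.
have -> : \sum_(i | (i \in S) && (i \in H)) w i = \sum_(i in H) w i.
  by apply: eq_bigl => x; case: (boolP (x \in H)) => Hx; rewrite ?andbT ?andbF // (subsetP HS).
rewrite addrC addrK; apply: eq_bigl => x; by rewrite inE andbC.
Qed.

Lemma wsum_comps (V : finType) (R : realFieldType) (e : rel V) (w : V -> R) (S : {set V}) :
  symmetric e -> \sum_(H in comps e S) wsum w H = wsum w S.
Proof.
move=> Hs; have /and3P[/eqP Hc Ht _] := comps_partition S Hs.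
by rewrite /wsum -{2}Hc big_trivIset.
Qed.

Lemma W_stt (V : finType) (R : realFieldType) (e : rel V) (w : V -> R) S t :
  symmetric e -> is_stt e S t -> W w (vseq t) = wsum w S.
Proof.
move=> Hs; elim => {S t} S r ch Hr Hperm Hch IH.
rewrite W_node (@sum_In _ _ _ _ (fun c => wsum w (vset c))); last by move=> c Hc; apply: IH.
rewrite (sum_children (fun H => wsum w H) (stt_node Hr Hperm Hch)).
by rewrite wsum_comps // -wsumD1.
Qed.

Lemma In_flatten (T U : Type) (f : T -> seq U) (l : seq T) c s :
  List.In c l -> List.In s (f c) -> List.In s (flatten (map f l)).
Proof.
elim: l => //= a l IH [->|Hc] Hs; apply: List.in_or_app; [by left | right].
exact: IH.
Qed.

Lemma key (V : finType) (e : rel V) (S' : {set V}) t : symmetric e -> is_stt e S' t ->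
  forall (S : {set V}) x0, S \subset S' -> conn e S -> x0 \in S ->
  exists s, List.In s (subtrees t) /\ rroot s \in S /\ S \subset vset s.
Proof.
move=> Hs; elim => {S' t} S' r ch Hr Hperm Hch IH S x0 HS Hc Hx0.
case: (boolP (r \in S)) => HrS.
  exists (Node r ch); split; first by rewrite subtrees_node; left.
  by split => //; rewrite (vset_stt Hs (stt_node Hr Hperm Hch)).
have HS' : S \subset S' :\ r.
  apply/subsetP => y Hy; rewrite in_setD1 (subsetP HS) // andbT.
  by apply/eqP => E; rewrite -E Hy in HrS.
have Hx0' : x0 \in S' :\ r by apply: (subsetP HS').
have [Hcomp _] := comp_in Hs Hx0'.
have [c [Hinc Hvc]] := comp_child (stt_node Hr Hperm Hch) Hcomp.
have HSc : S \subset vset c.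
  rewrite Hvc; apply/subsetP => y Hy; rewrite inE (subsetP HS') //=.
  apply: connect_sub (Hc _ _ Hx0 Hy) => u v Huv; apply: connect1.
  move: Huv; rewrite /induced /= => /and3P[-> Hu Hv].
  by rewrite !(subsetP HS').
have [s [Hs1 Hs2]] := IH c Hinc S x0 HSc Hc Hx0.
exists s; split => //; rewrite subtrees_node; right; exact: In_flatten Hinc Hs1.
Qed.

Definition wl (V : finType) (R : realFieldType) (w : V -> R) (l : seq V) (S : {set V}) :=
  \sum_(x <- l | x \in S) w x.
Definition F (V : finType) (R : realFieldType) (w : V -> R) (T : rtree V) (S : {set V}) :=
  \sum_(s <- subtrees T | rroot s \in S) wl w (vseq s) S.

Lemma wl_ge0 (V : finType) (R : realFieldType) (w : V -> R) l S :
  (forall x, 0 <= w x) -> 0 <= wl w l S.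
Proof. by move=> Hw; apply: sumr_ge0. Qed.

Lemma wl_mono (V : finType) (R : realFieldType) (w : V -> R) l (X Y : {set V}) :
  (forall x, 0 <= w x) -> X \subset Y -> wl w l X <= wl w l Y.
Proof.
move=> Hw HXY; rewrite /wl big_mkcond [X in _ <= X]big_mkcond /=.
apply: ler_sum => x _; case: ifP => Hx; first by rewrite (subsetP HXY).
by case: ifP.
Qed.

Lemma wl_undup (V : finType) (R : realFieldType) (w : V -> R) l X :
  (forall x, 0 <= w x) -> wl w (undup l) X <= wl w l X.
Proof.
move=> Hw; rewrite /wl; elim: l => //= a l IH.
rewrite big_cons; case: ifP => Ha.
  case: ifP => HaX //; by rewrite -[X in X <= _]add0r lerD.
by rewrite big_cons; case: ifP => // _; rewrite lerD2l.
Qed.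

Lemma wl_ge (V : finType) (R : realFieldType) (w : V -> R) l (X : {set V}) :
  (forall x, 0 <= w x) -> X \subset [set x in l] -> wsum w X <= wl w l X.
Proof.
move=> Hw HX; apply: le_trans (wl_undup _ _ Hw).
rewrite /wl -big_filter /wsum -big_enum.
rewrite (perm_big [seq x <- undup l | x \in X] (uniq_perm _ _ _)) //.
- exact: enum_uniq.
- by rewrite filter_uniq // undup_uniq.
move=> x; rewrite mem_enum mem_filter mem_undup.
by case: (boolP (x \in X)) => //= Hx; have := subsetP HX x Hx; rewrite inE.
Qed.

Lemma wl_split (V : finType) (R : realFieldType) (w : V -> R) l (S H : {set V}) :
  H \subset S -> wl w l S = wl w l H + wl w l (S :\: H).
Proof.
move=> HS; rewrite /wl (bigID (fun x => x \in H)) /=; congr (_ + _); apply: eq_bigl => x.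
  by case: (boolP (x \in H)) => Hx; rewrite ?andbT ?andbF // (subsetP HS).
by rewrite inE andbC.
Qed.

Lemma sum_ge_In (T : Type) (R : numDomainType) (l : seq T) (f : T -> R) a :
  (forall x, 0 <= f x) -> List.In a l -> f a <= \sum_(x <- l) f x.
Proof.
move=> Hf; elim: l => //= b l IH [->|Ha]; rewrite big_cons.
  by rewrite lerDl sumr_ge0.
by apply: le_trans (IH Ha) _; rewrite lerDr.
Qed.

Lemma star (R : realFieldType) (V : finType) (e : rel V) (w : V -> R) T (S : {set V}) c :
  symmetric e -> (forall x, 0 <= w x) -> is_stt e [set: V] T -> conn e S -> c \in S ->
  (forall H, H \in comps e (S :\ c) -> wsum w H <= wsum w S / 2%:R) ->
  w c + wsum w S + 2%:R * \sum_(H in comps e (S :\ c)) F w T H <= 2%:R * F w T S.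
Proof.
move=> Hs Hw HT HS Hc Hcent.
set P := comps e (S :\ c).
pose g s := \sum_(H in P | rroot s \in H) wl w (vseq s) H.
pose h s := if rroot s \in S then wl w (vseq s) S else 0.
have exch : \sum_(H in P) F w T H = \sum_(s <- subtrees T) g s.
  rewrite /F; under eq_bigr do rewrite big_mkcond.
  rewrite exchange_big /=; apply: eq_bigr => s _; by rewrite /g big_mkcondr.
have Fexp : F w T S = \sum_(s <- subtrees T) h s by rewrite /F big_mkcond.
have gE : forall s, g s = if rroot s \in S :\ c then
                            wl w (vseq s) (comp e (S :\ c) (rroot s)) else 0.
  move=> s; rewrite /g; case: ifP => Hu.
    rewrite (eq_bigl (fun H => H == comp e (S :\ c) (rroot s))) ?big_pred1_eq // => H.
    apply/andP/eqP => [[HP Hin]|->]; first exact: comps_eq.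
    exact: comp_in.
  rewrite big_pred0 // => H; apply/andP => -[HP Hin].
  by have := subsetP (comps_sub HP) _ Hin; rewrite Hu.
pose d s := h s - g s.
have dE : forall s, (rroot s \in S :\ c) ->
    d s = wl w (vseq s) (S :\: comp e (S :\ c) (rroot s)).
  move=> s Hu; rewrite /d gE Hu /h.
  have HuS : rroot s \in S by move: Hu; rewrite in_setD1 => /andP[].
  have Hsub : comp e (S :\ c) (rroot s) \subset S.
    apply/subsetP => x; rewrite inE => /andP[+ _]; rewrite in_setD1 => /andP[].
    by [].
  by rewrite HuS (wl_split w (vseq s) Hsub) addrAC subrr add0r.
have dC : forall s, rroot s = c -> d s = wl w (vseq s) S.
  move=> s Hu; rewrite /d gE /h Hu Hc in_setD1 eqxx /= subr0 //.
have dge : forall s, 0 <= d s.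
  move=> s; case: (boolP (rroot s \in S :\ c)) => Hu; first by rewrite dE // wl_ge0.
  case: (boolP (rroot s == c)) => [/eqP Huc|Huc]; first by rewrite dC // wl_ge0.
  rewrite /d gE (negbTE Hu) /h subr0; case: ifP => // _; exact: wl_ge0.
suff Hd : w c + wsum w S <= 2%:R * \sum_(s <- subtrees T) d s.
  rewrite exch Fexp; move: Hd; rewrite /d big_split /= sumrN; lra.
have HwS : w c <= wsum w S.
  by rewrite (wsumD1 _ Hc) lerDl sumr_ge0.
have [s0 [Hs0 [Hr0 HS0]]] := key Hs HT (subsetT S) HS Hc.
have Hc1 : conn e [set c].
  by move=> x y; rewrite !inE => /eqP-> /eqP->; exact: connect0.
have [sc [Hsc [Hrc HSc]]] := key Hs HT (subsetT [set c]) Hc1 (set11 c).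
move: Hrc; rewrite inE => /eqP Hrc.
case: (eqVneq (rroot s0) c) => Hr0c.
  have H1 := sum_ge_In dge Hs0; rewrite dC // in H1.
  have H2 : wsum w S <= wl w (vseq s0) S.
    by apply: wl_ge => //; apply/subsetP => x /(subsetP HS0); rewrite !inE.
  lra.
have Hu0 : rroot s0 \in S :\ c by rewrite in_setD1 Hr0c Hr0.
set H0 := comp e (S :\ c) (rroot s0).
have [HH0 _] := comp_in Hs Hu0.
have H0S : H0 \subset S.
  apply/subsetP => x /(subsetP (comps_sub HH0)); rewrite in_setD1 => /andP[].
  by [].
have Hcent0 := Hcent _ HH0.
pose f s := (if rroot s == rroot s0 then d s else 0) + (if rroot s == c then d s else 0).
have Hsum : \sum_(s <- subtrees T) f s <= \sum_(s <- subtrees T) d s.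
  apply: ler_sum => s _; rewrite /f; case: eqVneq => [->|_].
    by rewrite (negbTE Hr0c) addr0.
  by case: ifP; rewrite ?add0r ?dge.
have : \sum_(s <- subtrees T) f s = \sum_(s <- subtrees T) (if rroot s == rroot s0 then d s else 0)
     + \sum_(s <- subtrees T) (if rroot s == c then d s else 0) by rewrite big_split.
have Hd0 : wsum w S - wsum w H0 <= d s0.
  rewrite dE // -wsumD //; apply: wl_ge => //; apply/subsetP => x Hx.
  by have := subsetP HS0 x (subsetP (subsetDl S H0) x Hx); rewrite !inE.
have Hdc : w c <= d sc.
  have Hsub : [set c] \subset S by rewrite sub1set.
  rewrite dC //; apply: le_trans (wl_mono (vseq sc) Hw Hsub).
  have := @wl_ge _ _ w (vseq sc) [set c] Hw.
  rewrite /wsum big_set1; apply.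
  by apply/subsetP => x /(subsetP HSc); rewrite !inE.
move=> Hfsplit.
have Ha' : d s0 <= \sum_(s <- subtrees T) (if rroot s == rroot s0 then d s else 0).
  have := @sum_ge_In _ _ (subtrees T) (fun s => if rroot s == rroot s0 then d s else 0) s0.
  rewrite /= eqxx; apply => // s; case: ifP => // _; exact: dge.
have Hb' : d sc <= \sum_(s <- subtrees T) (if rroot s == c then d s else 0).
  have := @sum_ge_In _ _ (subtrees T) (fun s => if rroot s == c then d s else 0) sc.
  rewrite /= Hrc eqxx; apply => // s; case: ifP => // _; exact: dge.
have Hw0 : 0 <= w c by [].
lra.
Qed.

Lemma sum_In_le (T : Type) (R : numDomainType) (l : seq T) (f g : T -> R) :
  (forall c, List.In c l -> f c <= g c) -> \sum_(c <- l) f c <= \sum_(c <- l) g c.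
Proof.
elim: l => [|a l IH] H; rewrite ?big_nil // !big_cons; apply: lerD.
  by apply: H; left.
by apply: IH => c Hc; apply: H; right.
Qed.

Lemma main (R : realFieldType) (V : finType) (e : rel V) (w : V -> R) T :
  symmetric e -> (forall x, 0 <= w x) -> is_stt e [set: V] T ->
  forall S C, is_stt e S C ->
  (forall s, List.In s (subtrees C) -> is_centroid e w (vset s) (rroot s)) ->
  conn e S -> cost w C <= 2%:R * F w T S - wsum w S.
Proof.
move=> Hs Hw HT S C HC; elim: HC => {S C} S c ch Hc Hperm Hch IH Hcent Hconn.
have HC := stt_node Hc Hperm Hch.
have costC : cost w (Node c ch) = W w (vseq (Node c ch)) + \sum_(Ci <- ch) cost w Ci.
  rewrite costE subtrees_node big_cons big_flatten big_map; congr (_ + _).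
  by apply: sum_In => Ci _; rewrite costE.
rewrite costC (W_stt w Hs HC).
have Hle : \sum_(Ci <- ch) cost w Ci <=
           \sum_(Ci <- ch) (2%:R * F w T (vset Ci) - wsum w (vset Ci)).
  apply: sum_In_le => Ci Hin; apply: IH => //.
  - move=> s Hs'; apply: Hcent; rewrite subtrees_node; right; exact: In_flatten Hin Hs'.
  - exact: comp_conn Hs (child_comp HC Hin).
rewrite (sum_children (fun H => 2%:R * F w T H - wsum w H) HC) in Hle.
have [_ Hcd] : is_centroid e w (vset (Node c ch)) c.
  by apply: (Hcent (Node c ch)); rewrite subtrees_node; left.
rewrite (vset_stt Hs HC) in Hcd.
have Hst := star Hs Hw HT Hconn Hc Hcd.
move: Hle; rewrite big_split /= sumrN -mulr_sumr wsum_comps // (wsumD1 w Hc).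
move: Hst; rewrite (wsumD1 w Hc).
lra.
Qed.

Unset Implicit Arguments.

Theorem theorem1 (R : realFieldType) (V : finType) (e : rel V) (w : V -> R) :
  is_tree e -> (forall x, 0 <= w x) ->
  forall C T : rtree V, is_centroid_tree e w C -> is_stt e [set: V] T ->
  cost w C <= 2%:R * cost w T - wsum w [set: V].
Proof.
move=> [Hs [_ [Hconn _]]] Hw C T [HC Hcent] HT.
have Hc : conn e [set: V].
  move=> x y _ _; rewrite (@eq_connect _ _ e) ?Hconn // => u v.
  by rewrite /induced /= !in_setT !andbT.
have := main Hs Hw HT HC Hcent Hc.
suff -> : F w T [set: V] = cost w T by [].
rewrite costE /F; under eq_bigl do rewrite in_setT.
by apply: eq_bigr => s _; rewrite /wl /W; under eq_bigl do rewrite in_setT.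
Qed.
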